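(* Let $\phi$ be a positive function on closed curves such that $\phi(c)\ge a\,\mathrm{len}(c)$ for every curve $c$, for some constant $a>0$. Let $C\in C^1(I;\mathbb R^n)$ be a homotopy whose curves $C(\cdot,v)$ are all immersed. Then $$\int_0^1\phi\big(C(\cdot,v)\big)\int_{S^1}|\pi_N\partial_vC|^2|\partial_\theta C|\,d\theta\,dv\;\ge\;a\Big(\int_I|\partial_vC\wedge\partial_\theta C|\,d\theta\,dv\Big)^2 .$$ (The right-hand integral is the area swept out by the homotopy; hence the energy of any homotopy between $c_0,c_1$ is bounded below by $a$ times the square of the infimum of swept areas.)
   Context: $S^1=\mathbb R/2\pi\mathbb Z$, $I=S^1\times[0,1]$; $\mathrm{len}(c)=\int_{S^1}|\dot c|\,d\theta$; $T=\partial_\theta C/|\partial_\theta C|$, $\pi_Nw=w-\langle w,T\rangle T$; for $V,W\in\mathbb R^n$, $|V\wedge W|^2=|V|^2|W|^2-\langle V,W\rangle^2$ (the norm of the vector of all $2\times2$ minors of the matrix with columns $V,W$). *)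

(* Defs.v *)
From Stdlib Require Import Reals Lra.
From Coquelicot Require Import Coquelicot.
Open Scope R_scope.

(* Vectors of R^n are represented as functions [nat -> R]; only the
   components [k < n] are used. *)
Fixpoint sumk (n : nat) (f : nat -> R) : R :=
  match n with O => 0 | S m => sumk m f + f m end.

Definition dot (n : nat) (u w : nat -> R) : R := sumk n (fun k => u k * w k).
Definition vnorm (n : nat) (u : nat -> R) : R := sqrt (dot n u u).

Definition wedge_norm (n : nat) (V W : nat -> R) : R :=
  sqrt (vnorm n V ^ 2 * vnorm n W ^ 2 - dot n V W ^ 2).

Definition unit_tangent (n : nat) (t : nat -> R) : nat -> R :=
  fun k => t k / vnorm n t.
Definition normal_proj (n : nat) (t w : nat -> R) : nat -> R :=
  fun k => w k - dot n w (unit_tangent n t) * unit_tangent n t k.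

(* Curves S^1 -> R^n: functions R -> (nat -> R), 2pi-periodic. *)
Definition closed_C1_curve (n : nat) (c : R -> nat -> R) : Prop :=
  forall k, (k < n)%nat ->
    (forall t, c (t + 2 * PI) k = c t k) /\
    (forall t, ex_derive (fun s => c s k) t) /\
    (forall t, continuous (fun s => Derive (fun u => c u k) s) t).

Definition len (n : nat) (c : R -> nat -> R) : R :=
  RInt (fun t => vnorm n (fun k => Derive (fun s => c s k) t)) 0 (2 * PI).

(* joint continuity on the closed strip R x [0,1] (i.e. on I = S^1 x [0,1]) *)
Definition cont_strip (F : R -> R -> R) : Prop :=
  forall th v, 0 <= v <= 1 ->
    filterlim (fun p : R * R => F (fst p) (snd p))
      (within (fun p : R * R => 0 <= snd p <= 1) (locally (th, v)))
      (locally (F th v)).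

(* C in C^1(I;R^n), C(theta,v) = C theta v, with partial derivatives
   Cth = d_theta C and Cv = d_v C (d_v taken on 0<v<1 and extended
   continuously to the closed strip). *)
Definition C1_homotopy (n : nat) (C Cth Cv : R -> R -> nat -> R) : Prop :=
  forall k, (k < n)%nat ->
    (forall th v, C (th + 2 * PI) v k = C th v k) /\
    cont_strip (fun th v => C th v k) /\
    cont_strip (fun th v => Cth th v k) /\
    cont_strip (fun th v => Cv th v k) /\
    (forall th v, 0 <= v <= 1 -> is_derive (fun s => C s v k) th (Cth th v k)) /\
    (forall th v, 0 < v < 1 -> is_derive (fun w => C th w k) v (Cv th v k)).

Definition immersed_homotopy (n : nat) (Cth : R -> R -> nat -> R) : Prop :=
  forall th v, 0 <= v <= 1 -> vnorm n (Cth th v) <> 0.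

(* Main.v *)
Require Import Defs.
From Stdlib Require Import Reals Lra Lia.
From Coquelicot Require Import Coquelicot.
Open Scope R_scope.

Lemma sumk_ext m f g : (forall k, (k < m)%nat -> f k = g k) -> sumk m f = sumk m g.
Proof. induction m; simpl; intros H; [reflexivity|]. rewrite IHm by (intros; apply H; lia).
 rewrite H by lia. reflexivity. Qed.
Lemma sumk_plus m f g : sumk m (fun k => f k + g k) = sumk m f + sumk m g.
Proof. induction m; simpl; [lra|]. rewrite IHm; lra. Qed.
Lemma sumk_scal m c f : sumk m (fun k => c * f k) = c * sumk m f.
Proof. induction m; simpl; [lra|]. rewrite IHm; lra. Qed.
Lemma sumk_nonneg m f : (forall k, 0 <= f k) -> 0 <= sumk m f.
Proof. intros H; induction m; simpl; [lra|]. specialize (H m); lra. Qed.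
Lemma dot_self_nonneg n u : 0 <= dot n u u.
Proof. apply sumk_nonneg. intros; nra. Qed.
Lemma vnorm_nonneg n u : 0 <= vnorm n u.
Proof. apply sqrt_pos. Qed.
Lemma vnorm_sq n u : vnorm n u ^ 2 = dot n u u.
Proof. unfold vnorm. simpl. rewrite Rmult_1_r. apply sqrt_sqrt, dot_self_nonneg. Qed.

Lemma proj_identity n t w : vnorm n t <> 0 ->
  vnorm n (normal_proj n t w) ^ 2 * vnorm n t ^ 2
  = vnorm n w ^ 2 * vnorm n t ^ 2 - dot n w t ^ 2.
Proof.
  intros HN. set (N := vnorm n t) in *.
  assert (HNt : N ^ 2 = dot n t t) by apply vnorm_sq.
  assert (Hs : dot n w (unit_tangent n t) = dot n w t / N).
  { unfold dot, unit_tangent. unfold Rdiv. rewrite Rmult_comm, <- sumk_scal.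
    apply sumk_ext. intros; fold N; ring. }
  rewrite !vnorm_sq. fold N.
  unfold normal_proj. rewrite Hs.
  set (s := dot n w t / N).
  assert (E : dot n (fun k => w k - s * unit_tangent n t k) (fun k => w k - s * unit_tangent n t k)
     = dot n w w + (-2 * s / N) * dot n w t + (s^2 / N^2) * dot n t t).
  { unfold dot. rewrite <- !sumk_scal, <- !sumk_plus. apply sumk_ext. intros.
    unfold unit_tangent; fold N. field. exact HN. }
  rewrite E. rewrite <- HNt. unfold s. field. exact HN.
Qed.

Definition clamp (v : R) : R := Rmax 0 (Rmin 1 v).
Lemma clamp_in v : 0 <= clamp v <= 1.
Proof. unfold clamp, Rmax, Rmin. repeat destruct Rle_dec; lra. Qed.
Lemma clamp_id v : 0 <= v <= 1 -> clamp v = v.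
Proof. intros. unfold clamp, Rmax, Rmin. repeat destruct Rle_dec; lra. Qed.
Lemma clamp_lip a b : Rabs (clamp a - clamp b) <= Rabs (a - b).
Proof. unfold clamp, Rmax, Rmin, Rabs. repeat destruct Rle_dec; repeat destruct Rcase_abs; lra. Qed.

Definition JC (F : R -> R -> R) := forall x y, continuity_2d_pt F x y.

Lemma strip_clamp F : cont_strip F -> JC (fun th v => F th (clamp v)).
Proof.
  intros H x y. apply continuity_2d_pt_filterlim.
  pose proof (H x (clamp y) (clamp_in y)) as Hc.
  eapply (filterlim_comp _ _ _ (fun z : R * R => (fst z, clamp (snd z)))
           (fun p : R * R => F (fst p) (snd p))); [|exact Hc].
  intros P [eps HP]. exists eps. intros [z1 z2] [B1 B2]. simpl in *.
  apply HP; simpl.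
  - split; [exact B1|]. simpl. change (Rabs (clamp z2 - clamp y) < eps).
    change (Rabs (z2 - y) < eps) in B2. pose proof (clamp_lip z2 y); lra.
  - apply clamp_in.
Qed.

Lemma JC_sumk m (f : nat -> R -> R -> R) : (forall k, (k < m)%nat -> JC (f k)) ->
  JC (fun x y => sumk m (fun k => f k x y)).
Proof. induction m; intros H x y; simpl.
 - apply continuity_2d_pt_const.
 - apply continuity_2d_pt_plus; [apply IHm; intros; apply H; lia| apply H; lia]. Qed.

Definition JCv n (U : R -> R -> nat -> R) := forall k, (k < n)%nat -> JC (fun x y => U x y k).

Lemma JC_dot n U V : JCv n U -> JCv n V -> JC (fun x y => dot n (U x y) (V x y)).
Proof. intros HU HV. unfold dot. apply (JC_sumk n (fun k x y => U x y k * V x y k)).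
 intros k Hk x y. apply continuity_2d_pt_mult; [apply HU|apply HV]; lia. Qed.

Lemma JC_sqrt F : JC F -> (forall x y, 0 <= F x y) -> JC (fun x y => sqrt (F x y)).
Proof. intros H P x y. apply continuity_1d_2d_pt_comp; [apply continuity_pt_sqrt, P|apply H]. Qed.

Lemma JC_vnorm n U : JCv n U -> JC (fun x y => vnorm n (U x y)).
Proof. intros H. unfold vnorm. apply JC_sqrt; [apply JC_dot; auto|intros; apply dot_self_nonneg]. Qed.

Lemma JCv_unit n U : JCv n U -> (forall x y, vnorm n (U x y) <> 0) ->
  JCv n (fun x y => unit_tangent n (U x y)).
Proof. intros H N k Hk x y. unfold unit_tangent, Rdiv.
 apply continuity_2d_pt_mult; [apply H; auto|]. apply continuity_2d_pt_inv; [apply JC_vnorm; auto| apply N]. Qed.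

Lemma JCv_proj n U V : JCv n U -> JCv n V -> (forall x y, vnorm n (U x y) <> 0) ->
  JCv n (fun x y => normal_proj n (U x y) (V x y)).
Proof. intros HU HV N k Hk x y. unfold normal_proj.
 apply continuity_2d_pt_minus; [apply HV; auto|].
 apply continuity_2d_pt_mult; [apply JC_dot; auto; apply JCv_unit; auto|].
 apply JCv_unit; auto. Qed.

Lemma cont_of_eps (f : R -> R) x :
  (forall eps : posreal, exists d : posreal, forall y, Rabs (y - x) < d -> Rabs (f y - f x) < eps) ->
  continuous f x.
Proof. intros H. apply filterlim_locally. intros eps. destruct (H eps) as [d Hd].
 exists d. intros y Hy. apply Hd. exact Hy. Qed.

Lemma JC_slice F v th : JC F -> continuous (fun t => F t v) th.
Proof. intros H. apply cont_of_eps. intros eps. destruct (H th v eps) as [d Hd].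
 exists d. intros y Hy. apply Hd; auto. rewrite Rminus_diag, Rabs_R0. apply cond_pos. Qed.

Lemma JC_exRInt F v a b : JC F -> ex_RInt (fun t => F t v) a b.
Proof. intros H. apply (ex_RInt_continuous (V := R_CompleteNormedModule)). intros; apply JC_slice; auto. Qed.

Lemma param_cont F a b : JC F -> a <= b -> forall v0,
  continuous (fun v => RInt (fun t => F t v) a b) v0.
Proof.
  intros H Hab v0. apply cont_of_eps. intros eps.
  assert (He : 0 < eps / (b - a + 1)) by (apply Rdiv_lt_0_compat; [apply cond_pos|lra]).
  destruct (uniform_continuity_2d F a b (v0 - 1) (v0 + 1)
             (fun x y _ _ => H x y) (mkposreal _ He)) as [d Hd].
  assert (Hd1 : 0 < Rmin d 1) by (apply Rmin_pos; [apply cond_pos|lra]).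
  exists (mkposreal _ Hd1). simpl. intros v Hv.
  pose proof (Rmin_l d 1). pose proof (Rmin_r d 1).
  assert (Hv' : Rabs (v - v0) < 1) by lra. apply Rabs_def2 in Hv'.
  assert (E : RInt (fun t => F t v) a b - RInt (fun t => F t v0) a b
              = RInt (fun t => F t v - F t v0) a b).
  { symmetry. apply (RInt_minus (V := R_CompleteNormedModule)); apply JC_exRInt; auto. }
  rewrite E.
  eapply Rle_lt_trans.
  - apply (abs_RInt_le_const _ a b (eps / (b - a + 1))); auto.
    + apply (ex_RInt_minus (V := R_CompleteNormedModule)); apply JC_exRInt; auto.
    + intros t Ht. left. apply (Hd t v0 t v); auto; try lra.
      rewrite Rminus_diag, Rabs_R0. apply cond_pos.
  - assert (0 < eps) by apply cond_pos.
    set (c := eps / (b - a + 1)).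
    assert (Hc : c * (b - a + 1) = eps) by (unfold c; field; lra).
    assert (0 < c) by exact He. nra.
Qed.

Lemma RInt_plusR f g a b : ex_RInt f a b -> ex_RInt g a b ->
  RInt (fun x => f x + g x) a b = RInt f a b + RInt g a b.
Proof. intros. exact (RInt_plus (V := R_CompleteNormedModule) f g a b H H0). Qed.
Lemma RInt_scalR f a b l : ex_RInt f a b ->
  RInt (fun x => l * f x) a b = l * RInt f a b.
Proof. intros. exact (RInt_scal (V := R_CompleteNormedModule) f a b l H). Qed.
Lemma ex_RInt_plusR f g a b : ex_RInt f a b -> ex_RInt g a b ->
  ex_RInt (fun x => f x + g x) a b.
Proof. intros. exact (ex_RInt_plus (V := R_CompleteNormedModule) f g a b H H0). Qed.
Lemma ex_RInt_scalR f a b l : ex_RInt f a b -> ex_RInt (fun x => l * f x) a b.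
Proof. intros. exact (ex_RInt_scal (V := R_CompleteNormedModule) f a b l H). Qed.

Lemma CS_RInt P Q S a b : a <= b -> ex_RInt P a b -> ex_RInt Q a b -> ex_RInt S a b ->
  (forall x, a < x < b -> 0 <= P x /\ 0 <= S x /\ Q x ^ 2 <= P x * S x) ->
  (RInt Q a b) ^ 2 <= RInt P a b * RInt S a b.
Proof.
  intros Hab HP HQ HS H.
  assert (Ht : forall t, 0 <= RInt P a b + (-2 * t) * RInt Q a b + t ^ 2 * RInt S a b).
  { intros t.
    assert (E1 : ex_RInt (fun x => -2 * t * Q x) a b) by (apply ex_RInt_scalR; auto).
    assert (E2 : ex_RInt (fun x => t ^ 2 * S x) a b) by (apply ex_RInt_scalR; auto).
    assert (E3 : ex_RInt (fun x => P x + -2 * t * Q x) a b) by (apply ex_RInt_plusR; auto).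
    assert (E : RInt (fun x => P x + -2 * t * Q x + t ^ 2 * S x) a b
              = RInt P a b + (-2 * t) * RInt Q a b + t ^ 2 * RInt S a b).
    { rewrite (RInt_plusR (fun x => P x + -2 * t * Q x) (fun x => t ^ 2 * S x)) by auto.
      rewrite (RInt_plusR P (fun x => -2 * t * Q x)) by auto.
      rewrite (RInt_scalR Q), (RInt_scalR S) by auto. reflexivity. }
    rewrite <- E.
    apply RInt_ge_0; auto.
    - apply ex_RInt_plusR; auto.
    - intros x Hx. destruct (H x Hx) as (h1 & h2 & h3).
      destruct (Rle_lt_or_eq_dec 0 (S x) h2) as [Hs|Hs].
      + apply Rmult_le_reg_l with (S x); auto. rewrite Rmult_0_r.
        assert (0 <= (t * S x - Q x) ^ 2) by (apply pow2_ge_0).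
        assert (Ex : S x * (P x + -2 * t * Q x + t ^ 2 * S x) = (t * S x - Q x) ^ 2 + (P x * S x - Q x ^ 2)) by ring.
        rewrite Ex. lra.
      + rewrite <- Hs in h3. rewrite Rmult_0_r in h3.
        assert (Q x = 0) by nra.
        rewrite H0, <- Hs. lra. }
  assert (Hs0 : 0 <= RInt S a b) by (apply RInt_ge_0; auto; intros x Hx; apply (H x Hx)).
  set (p := RInt P a b) in *. set (q := RInt Q a b) in *. set (s := RInt S a b) in *.
  destruct (Rle_lt_or_eq_dec 0 s Hs0) as [Hs|Hs].
  - specialize (Ht (q / s)).
    assert (E : p + -2 * (q / s) * q + (q / s) ^ 2 * s = p - q^2 / s) by (field; lra).
    rewrite E in Ht.
    assert (q ^ 2 / s <= p) by lra.
    apply (Rmult_le_compat_r s) in H0; [|lra].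
    unfold Rdiv in H0. rewrite Rmult_assoc, Rinv_l in H0 by lra. lra.
  - rewrite <- Hs in *. destruct (Req_dec q 0) as [Hq|Hq].
    + rewrite Hq. simpl. lra.
    + specialize (Ht ((p + 1) / (2 * q))).
      assert (E : p + -2 * ((p + 1) / (2 * q)) * q + ((p + 1) / (2 * q)) ^ 2 * 0 = -1)
        by (field; auto).
      lra.
Qed.

Lemma JC_pow2 F : JC F -> JC (fun x y => F x y ^ 2).
Proof. intros H x y. eapply continuity_2d_pt_ext; [|apply continuity_2d_pt_mult; apply H].
 intros; simpl; ring. Qed.
Lemma JC_mult F G : JC F -> JC G -> JC (fun x y => F x y * G x y).
Proof. intros H1 H2 x y. apply continuity_2d_pt_mult; auto. Qed.
Lemma JC_minus F G : JC F -> JC G -> JC (fun x y => F x y - G x y).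
Proof. intros H1 H2 x y. apply continuity_2d_pt_minus; auto. Qed.

Lemma vnorm_ext n u w : (forall k, (k < n)%nat -> u k = w k) -> vnorm n u = vnorm n w.
Proof. intros H. unfold vnorm, dot. f_equal. apply sumk_ext. intros. rewrite H; auto. Qed.

Lemma wedge_sq n V W : vnorm n W <> 0 ->
  wedge_norm n V W ^ 2 = vnorm n (normal_proj n W V) ^ 2 * vnorm n W ^ 2.
Proof. intros H. unfold wedge_norm. rewrite <- proj_identity by auto.
 apply pow2_sqrt. apply Rmult_le_pos; apply pow2_ge_0. Qed.

Theorem mainTheorem11 (n : nat) (phi : (R -> nat -> R) -> R) (a : R)
  (C Cth Cv : R -> R -> nat -> R) :
  0 < a ->
  (forall c, closed_C1_curve n c -> 0 < phi c) ->
  (forall c, closed_C1_curve n c -> a * len n c <= phi c) ->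
  C1_homotopy n C Cth Cv ->
  immersed_homotopy n Cth ->
  ex_RInt (fun v => phi (fun th => C th v) *
             RInt (fun th => vnorm n (normal_proj n (Cth th v) (Cv th v)) ^ 2
                             * vnorm n (Cth th v)) 0 (2 * PI)) 0 1 ->
  a * (RInt (fun v => RInt (fun th => wedge_norm n (Cv th v) (Cth th v)) 0 (2 * PI)) 0 1) ^ 2
  <= RInt (fun v => phi (fun th => C th v) *
             RInt (fun th => vnorm n (normal_proj n (Cth th v) (Cv th v)) ^ 2
                             * vnorm n (Cth th v)) 0 (2 * PI)) 0 1.
Proof.
  intros Ha Hpos Hphi HC Himm Hex.
  assert (HPI : 0 <= 2 * PI) by (pose proof PI_RGT_0; lra).
  assert (HCth : JCv n (fun th v => Cth th (clamp v))).
  { intros k Hk. apply (strip_clamp (fun th v => Cth th v k)). apply (HC k Hk). }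
  assert (HCv : JCv n (fun th v => Cv th (clamp v))).
  { intros k Hk. apply (strip_clamp (fun th v => Cv th v k)). apply (HC k Hk). }
  assert (HNz : forall x y, vnorm n (Cth x (clamp y)) <> 0).
  { intros x y. apply Himm, clamp_in. }
  assert (JN : JC (fun th v => vnorm n (Cth th (clamp v)))) by (apply JC_vnorm; auto).
  assert (JP : JC (fun th v => vnorm n (normal_proj n (Cth th (clamp v)) (Cv th (clamp v))) ^ 2
                               * vnorm n (Cth th (clamp v)))).
  { apply JC_mult; auto. apply JC_pow2. apply JC_vnorm. apply JCv_proj; auto. }
  assert (JW : JC (fun th v => wedge_norm n (Cv th (clamp v)) (Cth th (clamp v)))).
  { unfold wedge_norm. apply JC_sqrt.
    - apply JC_minus; [apply JC_mult; apply JC_pow2; apply JC_vnorm; auto|].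
      apply JC_pow2. apply JC_dot; auto.
    - intros x y. rewrite <- proj_identity by auto.
      apply Rmult_le_pos; apply pow2_ge_0. }
  set (Ac := fun v => RInt (fun th => wedge_norm n (Cv th (clamp v)) (Cth th (clamp v))) 0 (2 * PI)).
  assert (HAc : forall v, continuous Ac v) by (intros; apply param_cont; auto).
  assert (Hpt : forall v, 0 <= v <= 1 ->
     a * Ac v ^ 2 <= phi (fun th => C th v) *
             RInt (fun th => vnorm n (normal_proj n (Cth th v) (Cv th v)) ^ 2
                             * vnorm n (Cth th v)) 0 (2 * PI)).
  { intros v Hv. unfold Ac. pose proof (clamp_id v Hv) as Hcl. rewrite Hcl.
    pose proof (JC_exRInt _ v 0 (2 * PI) JN) as EN; simpl in EN; rewrite Hcl in EN.
    pose proof (JC_exRInt _ v 0 (2 * PI) JP) as EP; simpl in EP; rewrite Hcl in EP.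
    pose proof (JC_exRInt _ v 0 (2 * PI) JW) as EW; simpl in EW; rewrite Hcl in EW.
    assert (Hnz : forall th, vnorm n (Cth th v) <> 0).
    { intros th. specialize (HNz th v). rewrite Hcl in HNz. exact HNz. }
    assert (HCS := CS_RInt _ _ _ 0 (2 * PI) HPI EP EW EN).
    assert (HCS' : RInt (fun th => wedge_norm n (Cv th v) (Cth th v)) 0 (2 * PI) ^ 2 <=
       RInt (fun th => vnorm n (normal_proj n (Cth th v) (Cv th v)) ^ 2 * vnorm n (Cth th v)) 0 (2 * PI)
       * RInt (fun th => vnorm n (Cth th v)) 0 (2 * PI)).
    { apply HCS. intros x Hx. repeat split.
      - apply Rmult_le_pos; [apply pow2_ge_0|apply vnorm_nonneg].
      - apply vnorm_nonneg.
      - rewrite wedge_sq by auto. right; ring. }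
    clear HCS.
    assert (Hcurve : closed_C1_curve n (fun th => C th v)).
    { intros k Hk. destruct (HC k Hk) as (Hper & _ & Hcth & _ & Hd & _).
      split; [intros; apply Hper|]. split.
      - intros t. exists (Cth t v k). apply Hd; auto.
      - intros t. apply (continuous_ext (fun s => Cth s v k)).
        + intros s. symmetry. apply is_derive_unique. apply Hd; auto.
        + pose proof (JC_slice _ v t (strip_clamp _ Hcth)) as Hs. simpl in Hs.
          rewrite Hcl in Hs. exact Hs. }
    assert (Hlen : len n (fun th => C th v) = RInt (fun th => vnorm n (Cth th v)) 0 (2 * PI)).
    { unfold len. apply RInt_ext. intros x _. apply vnorm_ext. intros k Hk.
      apply is_derive_unique. apply (HC k Hk); auto. }
    pose proof (Hphi _ Hcurve) as Hph. rewrite Hlen in Hph.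
    assert (HE : 0 <= RInt (fun th => vnorm n (normal_proj n (Cth th v) (Cv th v)) ^ 2 * vnorm n (Cth th v)) 0 (2 * PI)).
    { apply RInt_ge_0; auto. intros. apply Rmult_le_pos; [apply pow2_ge_0|apply vnorm_nonneg]. }
    set (Q := RInt (fun th => wedge_norm n (Cv th v) (Cth th v)) 0 (2 * PI)) in *.
    set (E := RInt (fun th => vnorm n (normal_proj n (Cth th v) (Cv th v)) ^ 2 * vnorm n (Cth th v)) 0 (2 * PI)) in *.
    set (L := RInt (fun th => vnorm n (Cth th v)) 0 (2 * PI)) in *.
    set (F := phi (fun th => C th v)) in *.
    apply Rle_trans with (a * (E * L)).
    + apply Rmult_le_compat_l; lra.
    + replace (a * (E * L)) with (E * (a * L)) by ring.
      rewrite (Rmult_comm F). apply Rmult_le_compat_l; auto. }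
  rewrite (RInt_ext _ Ac).
  2:{ intros x Hx. rewrite Rmin_left, Rmax_right in Hx by lra. unfold Ac.
      rewrite clamp_id by lra. reflexivity. }
  assert (EA : ex_RInt Ac 0 1).
  { apply (ex_RInt_continuous (V := R_CompleteNormedModule)). intros; apply HAc. }
  assert (EA2 : ex_RInt (fun v => Ac v ^ 2) 0 1).
  { apply (ex_RInt_continuous (V := R_CompleteNormedModule)). intros z _.
    apply (continuous_ext (fun y : R => Ac y * Ac y)).
    - intros; simpl; ring.
    - exact (continuous_mult (K := R_AbsRing) Ac Ac z (HAc z) (HAc z)). }
  assert (E1 : ex_RInt (fun _ => 1) 0 1) by apply (ex_RInt_const (V := R_NormedModule)).
  assert (HCS := CS_RInt (fun v => Ac v ^ 2) Ac (fun _ => 1) 0 1 ltac:(lra) EA2 EA E1).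
  assert (HCS' : RInt Ac 0 1 ^ 2 <= RInt (fun v => Ac v ^ 2) 0 1 * RInt (fun _ => 1) 0 1).
  { apply HCS. intros x _. split; [apply pow2_ge_0|]. split; lra. }
  clear HCS.
  assert (H1 : RInt (fun _ => 1) 0 1 = 1).
  { rewrite (RInt_const (V := R_CompleteNormedModule)). unfold scal; simpl. unfold mult; simpl. ring. }
  rewrite H1, Rmult_1_r in HCS'.
  apply Rle_trans with (a * RInt (fun v => Ac v ^ 2) 0 1).
  - apply Rmult_le_compat_l; lra.
  - rewrite <- RInt_scalR by auto.
    apply RInt_le; auto; [lra| apply ex_RInt_scalR; auto |].
    intros x Hx. apply Hpt. lra.
Qed.
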